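(* Let $G$ be a flag with vertices $v_1,\dots,v_n$ ($n\ge 6$) ordered by increasing $x$-coordinate. Then among $v_1,\dots,v_6$ there is either a separating edge $v_iv_j$ with $i<j\le 6$, or a good upper triplet $(v_i,v_j,v_k)$ with $i<j<k\le 6$, or a good lower triplet $(v_i,v_j,v_k)$ with $i<j<k\le6$.
   Context: Let $\mathcal C=S^1\times\mathbb R$ ($S^1=[0,1]$ with $0\sim1$), points $p=(p_x,p_y)$ with $0\le p_x<1$. A flag is a graph drawn on $\mathcal C$ (vertices distinct points, edges Jordan arcs, no overlapping edges, no edge through a vertex) that is complete, simple (any two edges meet in at most one point: a common endpoint or a proper crossing), monotone (every edge meets each vertical line $l_{x=a}=\{p:p_x=a\}$ at most once, no two vertices share an $x$-coordinate, no vertex has $x$-coordinate $0$), and such that $l_{x=0}$ meets every edge in its relative interior. A point $v$ is related to an $x$-monotone curve $e$ if $l_{x=v_x}$ meets $e$ in its relative interior; then $v$ is below (above) $e$ if $v_y$ is smaller (larger) than the $y$-coordinate of $l_{x=v_x}\cap e$. Two $x$-monotone curves $e,f$ are related if they do not cross, some vertical line meets both relative interiors, and all such lines meet them in the same vertical order; then $e\prec f$ means that on every vertical line meeting both relative interiors, $e$'s point has $y$-coordinate at most that of $f$'s point. For $i<j$, $V^+(v_iv_j)=\{v_s: s>j,\ v_s \text{ above } v_iv_j\}$ and $V^-(v_iv_j)=\{v_s: s>j,\ v_s \text{ below } v_iv_j\}$; $v_iv_j$ is separating if $|V^+(v_iv_j)|>1$ and $|V^-(v_iv_j)|>1$. For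 $i<j<k$, $(v_i,v_j,v_k)$ is a good upper triplet if $v_jv_k\prec v_iv_j$ and $|V^+(v_jv_k)|\le1$, and a good lower triplet if $v_iv_j\prec v_jv_k$ and $|V^-(v_jv_k)|\le1$. *)

(* Defs.v *)
From Stdlib Require Import Reals.
Open Scope R_scope.

(* ------------------------------------------------------------------------
   Encoding of a flag on the cylinder C = S^1 x R (S^1 = [0,1), 0 ~ 1).
   Vertices v_1,...,v_n (indices 1..n) have coordinates (vx s, vy s).
   Since every edge v_iv_j (i<j) is x-monotone, is a Jordan arc and crosses
   l_{x=0} in its relative interior, it covers exactly the circular arc
   from vx j through 0 to vx i; unwrapping, it is the graph of a continuous
   function  ef i j  on the parameter interval [vx j, 1 + vx i]:
   the point of parameter t is (frac_part t, ef i j t).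
   ------------------------------------------------------------------------ *)

Definition cont_on (f : R -> R) (a b : R) : Prop :=
  forall t, a <= t <= b -> forall eps, 0 < eps ->
    exists delta, 0 < delta /\
      forall s, a <= s <= b -> Rabs (s - t) < delta -> Rabs (f s - f t) < eps.

Definition is_edge (n i j : nat) : Prop := (1 <= i)%nat /\ (i < j)%nat /\ (j <= n)%nat.

Definition on_edge (vx : nat -> R) (ef : nat -> nat -> R -> R) (i j : nat) (x y : R) : Prop :=
  exists t, vx j <= t <= 1 + vx i /\ frac_part t = x /\ ef i j t = y.

Definition on_int (vx : nat -> R) (ef : nat -> nat -> R -> R) (i j : nat) (x y : R) : Prop :=
  exists t, vx j < t < 1 + vx i /\ frac_part t = x /\ ef i j t = y.

Definition crossing_at (vx : nat -> R) (ef : nat -> nat -> R -> R)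
    (i j k l : nat) (x y : R) : Prop :=
  exists t u, vx j < t < 1 + vx i /\ vx l < u < 1 + vx k /\
    frac_part t = x /\ frac_part u = x /\ ef i j t = y /\ ef k l u = y /\
    exists d, 0 < d /\ forall h, 0 < h < d ->
      (ef i j (t - h) - ef k l (u - h)) * (ef i j (t + h) - ef k l (u + h)) < 0.

Definition is_flag (n : nat) (vx vy : nat -> R) (ef : nat -> nat -> R -> R) : Prop :=
  (* vertices lie off l_{x=0}, with x-coordinates in (0,1) *)
  (forall s, (1 <= s <= n)%nat -> 0 < vx s < 1) /\
  (forall i j, (1 <= i)%nat -> (i < j)%nat -> (j <= n)%nat -> vx i < vx j) /\
  (* complete: every pair is joined by an x-monotone Jordan arc through x=0 *)
  (forall i j, is_edge n i j ->
     ef i j (vx j) = vy j /\ ef i j (1 + vx i) = vy i /\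
     cont_on (ef i j) (vx j) (1 + vx i)) /\
  (forall i j s, is_edge n i j -> (1 <= s <= n)%nat -> s <> i -> s <> j ->
     ~ on_edge vx ef i j (vx s) (vy s)) /\
  (forall i j k l, is_edge n i j -> is_edge n k l -> (i, j) <> (k, l) ->
     (forall x y x' y', on_edge vx ef i j x y -> on_edge vx ef k l x y ->
        on_edge vx ef i j x' y' -> on_edge vx ef k l x' y' -> x = x' /\ y = y') /\
     (forall x y, on_edge vx ef i j x y -> on_edge vx ef k l x y ->
        (exists w, (w = i \/ w = j) /\ (w = k \/ w = l) /\ x = vx w /\ y = vy w)
        \/ crossing_at vx ef i j k l x y)).

Definition v_above (vx vy : nat -> R) ef (s i j : nat) : Prop :=
  exists y, on_int vx ef i j (vx s) y /\ y < vy s.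
Definition v_below (vx vy : nat -> R) ef (s i j : nat) : Prop :=
  exists y, on_int vx ef i j (vx s) y /\ vy s < y.

Definition in_Vplus (n : nat) vx vy ef (i j s : nat) : Prop :=
  (j < s)%nat /\ (s <= n)%nat /\ v_above vx vy ef s i j.
Definition in_Vminus (n : nat) vx vy ef (i j s : nat) : Prop :=
  (j < s)%nat /\ (s <= n)%nat /\ v_below vx vy ef s i j.

Definition card_gt1 (A : nat -> Prop) : Prop := exists s1 s2, s1 <> s2 /\ A s1 /\ A s2.
Definition card_le1 (A : nat -> Prop) : Prop := forall s1 s2, A s1 -> A s2 -> s1 = s2.

Definition separating n vx vy ef (i j : nat) : Prop :=
  card_gt1 (in_Vplus n vx vy ef i j) /\ card_gt1 (in_Vminus n vx vy ef i j).

Definition edges_cross vx ef (i j k l : nat) : Prop :=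
  exists x y, crossing_at vx ef i j k l x y.

Definition edges_related vx ef (i j k l : nat) : Prop :=
  ~ edges_cross vx ef i j k l /\
  (exists x y1 y2, on_int vx ef i j x y1 /\ on_int vx ef k l x y2) /\
  ((forall x y1 y2, on_int vx ef i j x y1 -> on_int vx ef k l x y2 -> y1 <= y2) \/
   (forall x y1 y2, on_int vx ef i j x y1 -> on_int vx ef k l x y2 -> y2 <= y1)).

Definition edge_prec vx ef (i j k l : nat) : Prop :=
  edges_related vx ef i j k l /\
  (forall x y1 y2, on_int vx ef i j x y1 -> on_int vx ef k l x y2 -> y1 <= y2).

Definition good_upper n vx vy ef (i j k : nat) : Prop :=
  edge_prec vx ef j k i j /\ card_le1 (in_Vplus n vx vy ef j k).
Definition good_lower n vx vy ef (i j k : nat) : Prop :=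
  edge_prec vx ef i j j k /\ card_le1 (in_Vminus n vx vy ef j k).

(* Main.v *)
Require Import Defs.
From Stdlib Require Import Reals Lra Lia Classical.
Open Scope R_scope.


Lemma fp_lt1 : forall t, 0 <= t < 1 -> frac_part t = t.
Proof.
  intros t Ht. destruct (Int_part_frac_part_spec t 0 t Ht) as [_ H].
  - simpl. lra.
  - auto.
Qed.

Lemma fp_ge1 : forall t, 1 <= t < 2 -> frac_part t = t - 1.
Proof.
  intros t Ht. destruct (Int_part_frac_part_spec t 1 (t-1)) as [_ H].
  - lra.
  - simpl. lra.
  - auto.
Qed.

Lemma fp_cases : forall t, 0 <= t < 2 ->
  (t < 1 /\ frac_part t = t) \/ (1 <= t /\ frac_part t = t - 1).
Proof.
  intros t Ht. destruct (Rlt_le_dec t 1).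
  - left. split; auto. apply fp_lt1. lra.
  - right. split; auto. apply fp_ge1. lra.
Qed.

Lemma fp_1plus : forall t, 0 <= t < 1 -> frac_part (1 + t) = t.
Proof. intros t Ht. rewrite fp_ge1; lra. Qed.

Lemma cont_on_sub : forall f a b c d, a <= c -> d <= b -> cont_on f a b -> cont_on f c d.
Proof.
  intros f a b c d H1 H2 H t Ht eps He.
  destruct (H t ltac:(lra) eps He) as [del [Hd Hs]].
  exists del. split; auto. intros s Hs1 Hs2. apply Hs; auto. lra.
Qed.

Lemma cont_on_minus : forall f g a b, cont_on f a b -> cont_on g a b ->
  cont_on (fun t => f t - g t) a b.
Proof.
  intros f g a b Hf Hg t Ht eps He.
  destruct (Hf t Ht (eps/2) ltac:(lra)) as [d1 [Hd1 H1]].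
  destruct (Hg t Ht (eps/2) ltac:(lra)) as [d2 [Hd2 H2]].
  exists (Rmin d1 d2). split. { apply Rmin_pos; auto. }
  intros s Hs Hst.
  assert (A1 : Rabs (s - t) < d1) by (pose proof (Rmin_l d1 d2); lra).
  assert (A2 : Rabs (s - t) < d2) by (pose proof (Rmin_r d1 d2); lra).
  specialize (H1 s Hs A1). specialize (H2 s Hs A2).
  replace (f s - g s - (f t - g t)) with ((f s - f t) - (g s - g t)) by ring.
  pose proof (Rabs_triang (f s - f t) (- (g s - g t))) as H. rewrite Rabs_Ropp in H.
  replace (f s - f t - (g s - g t)) with (f s - f t + - (g s - g t)) by ring. lra.
Qed.

Lemma cont_on_shift : forall g c a b, cont_on g (c + a) (c + b) ->
  cont_on (fun x => g (c + x)) a b.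
Proof.
  intros g c a b H t Ht eps He.
  destruct (H (c + t) ltac:(lra) eps He) as [d [Hd Hs]].
  exists d. split; auto. intros s Hs1 Hs2. apply Hs. lra.
  replace (c + s - (c + t)) with (s - t) by ring. auto.
Qed.

Definition clamp (a b s : R) := Rmax a (Rmin b s).

Lemma clamp_in : forall a b s, a <= b -> a <= clamp a b s <= b.
Proof.
  intros a b s Hab. unfold clamp, Rmax, Rmin.
  destruct (Rle_dec b s); destruct (Rle_dec a _); lra.
Qed.

Lemma clamp_id : forall a b s, a <= s <= b -> clamp a b s = s.
Proof.
  intros a b s H. unfold clamp, Rmax, Rmin.
  destruct (Rle_dec b s); destruct (Rle_dec a _); lra.
Qed.

Lemma clamp_lip : forall a b s t, a <= b -> Rabs (clamp a b s - clamp a b t) <= Rabs (s - t).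
Proof.
  intros a b s t Hab. unfold clamp, Rmax, Rmin.
  destruct (Rle_dec b s); destruct (Rle_dec b t);
  repeat match goal with |- context [Rle_dec ?x ?y] => destruct (Rle_dec x y) end;
  unfold Rabs; repeat match goal with |- context [Rcase_abs ?x] => destruct (Rcase_abs x) end; lra.
Qed.

Lemma clamp_cont : forall F a b, a <= b -> cont_on F a b -> continuity (fun s => F (clamp a b s)).
Proof.
  intros F a b Hab H x. unfold continuity_pt, continue_in, limit1_in, limit_in.
  intros eps He. simpl. unfold R_dist.
  destruct (H (clamp a b x) (clamp_in a b x Hab) eps He) as [d [Hd Hs]].
  exists d. split; auto. intros s [_ Hsx].
  apply Hs. apply clamp_in; auto.
  eapply Rle_lt_trans. apply clamp_lip; auto. auto.
Qed.

Lemma ivt_on : forall F a b, cont_on F a b -> forall t1 t2,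
  a <= t1 -> t1 <= t2 -> t2 <= b ->
  ((F t1 < 0 /\ 0 < F t2) \/ (0 < F t1 /\ F t2 < 0)) ->
  exists t, t1 <= t <= t2 /\ F t = 0.
Proof.
  intros F a b H t1 t2 H1 H12 H2 Hs.
  assert (Hc : cont_on F t1 t2) by (eapply cont_on_sub; eauto).
  destruct (Req_dec t1 t2) as [E|Hne].
  { subst. lra. }
  assert (Hlt : t1 < t2) by lra.
  pose proof (clamp_cont F t1 t2 H12 Hc) as Hcont.
  assert (E1 : clamp t1 t2 t1 = t1) by (apply clamp_id; lra).
  assert (E2 : clamp t1 t2 t2 = t2) by (apply clamp_id; lra).
  destruct Hs as [[Ha Hb]|[Ha Hb]].
  - destruct (IVT (fun s => F (clamp t1 t2 s)) t1 t2 Hcont Hlt) as [z [Hz Fz]].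
    + rewrite E1; auto.
    + rewrite E2; auto.
    + exists z. split; auto. rewrite clamp_id in Fz; auto.
  - assert (Hcont' : continuity (fun s => - F (clamp t1 t2 s))).
    { apply continuity_opp. auto. }
    destruct (IVT (fun s => - F (clamp t1 t2 s)) t1 t2 Hcont' Hlt) as [z [Hz Fz]].
    + rewrite E1; lra.
    + rewrite E2; lra.
    + exists z. split; auto. rewrite clamp_id in Fz; auto. lra.
Qed.


Definition Up (n : nat) (V : nat -> nat -> nat -> R) (Y : nat -> R) (i j : nat) : nat -> Prop :=
  fun s => (j < s <= n)%nat /\ V i j s < Y s.
Definition Dn (n : nat) (V : nat -> nat -> nat -> R) (Y : nat -> R) (i j : nat) : nat -> Prop :=
  fun s => (j < s <= n)%nat /\ Y s < V i j s.
Definition InL (n k i p : nat) : Prop := (k <= p <= n)%nat \/ (1 <= p <= i)%nat.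

Definition core_hyps (n : nat) (V : nat -> nat -> nat -> R) (Y : nat -> R) : Prop :=
  (forall i j, (1 <= i)%nat -> (i < j)%nat -> (j <= n)%nat -> V i j j = Y j /\ V i j i = Y i) /\
  (forall i j s, (1 <= i)%nat -> (i < j)%nat -> (j <= n)%nat -> (1 <= s <= n)%nat ->
      s <> i -> s <> j -> (j < s \/ s < i)%nat -> V i j s <> Y s) /\
  (forall i j k, (1 <= i)%nat -> (i < j)%nat -> (j < k)%nat -> (k <= n)%nat ->
     forall p q, InL n k i p -> InL n k i q ->
     (V i j p < V j k p -> V i j q < V j k q) /\ (V j k p < V i j p -> V j k q < V i j q)) /\
  (forall i j k l, (1 <= i)%nat -> (i < j)%nat -> (j < k)%nat -> (k < l)%nat -> (l <= n)%nat ->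
     forall p1 p2 q1 q2, InL n l i p1 -> InL n l i p2 -> (j <= q1 <= k)%nat -> (j <= q2 <= k)%nat ->
     ~ ((V i j p1 < V k l p1 /\ V k l p2 < V i j p2) /\ (V i j q1 < V k l q1 /\ V k l q2 < V i j q2))) /\
  (forall i j k l, (1 <= i)%nat -> (i < j)%nat -> (j < k)%nat -> (k < l)%nat -> (l <= n)%nat ->
     forall a b c, (j <= a)%nat -> (a < b)%nat -> (b < c)%nat -> (c <= k)%nat ->
     ~ ((V i j a < V k l a /\ V k l b < V i j b) /\ (V i j c < V k l c /\ V k l b < V i j b)) /\
     ~ ((V i j b < V k l b /\ V k l a < V i j a) /\ (V i j b < V k l b /\ V k l c < V i j c))) /\
  (forall i j, (1 <= i)%nat -> (i < j)%nat -> (j <= 6)%nat ->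
     ~ (card_gt1 (Up n V Y i j) /\ card_gt1 (Dn n V Y i j))) /\
  (forall i j k, (1 <= i)%nat -> (i < j)%nat -> (j < k)%nat -> (k <= 6)%nat ->
     Y k < V i j k -> card_gt1 (Up n V Y j k)) /\
  (forall i j k, (1 <= i)%nat -> (i < j)%nat -> (j < k)%nat -> (k <= 6)%nat ->
     V i j k < Y k -> card_gt1 (Dn n V Y j k)).


Close Scope R_scope.
Notation "a <r b" := (Rlt a b) (at level 70).
Notation "a <=r b" := (Rle a b) (at level 70).

Ltac inl := unfold InL; lia.

Lemma gt1_mk : forall (P : nat -> Prop) a b, P a -> P b -> a <> b -> card_gt1 P.
Proof. intros P a b Ha Hb Hab. exists a, b. auto. Qed.

Lemma core (n : nat) (V : nat -> nat -> nat -> R) (Y : nat -> R) :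
  (6 <= n)%nat -> core_hyps n V Y -> Y 3 <r V 1 2 3 -> False.
Proof.
  intros Hn [HE [HNE [HADJ [HCR2 [HCR3 [HNS [HNU HNL]]]]]]] H3.
  pose proof (HE 1 2 ltac:(lia) ltac:(lia) ltac:(lia)) as [E122 E121].
  pose proof (HE 1 3 ltac:(lia) ltac:(lia) ltac:(lia)) as [E133 E131].
  pose proof (HE 1 4 ltac:(lia) ltac:(lia) ltac:(lia)) as [E144 E141].
  pose proof (HE 2 3 ltac:(lia) ltac:(lia) ltac:(lia)) as [E233 E232].
  pose proof (HE 3 4 ltac:(lia) ltac:(lia) ltac:(lia)) as [E344 E343].
  pose proof (HE 4 5 ltac:(lia) ltac:(lia) ltac:(lia)) as [E455 E454].
  pose proof (HE 5 6 ltac:(lia) ltac:(lia) ltac:(lia)) as [E566 E565].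
  assert (g1 : forall q, InL n 3 1 q -> V 2 3 q <r V 1 2 q).
  { intros q Hq. apply (proj2 (HADJ 1 2 3 ltac:(lia) ltac:(lia) ltac:(lia) ltac:(lia) 3 q ltac:(inl) Hq)). lra. }
  assert (g2 : card_gt1 (Up n V Y 2 3)) by (apply (HNU 1 2 3); auto; lia).
  assert (g3 : ~ card_gt1 (Dn n V Y 2 3)) by (intro; apply (HNS 2 3); auto; lia).
  destruct (Rtotal_order (Y 4) (V 2 3 4)) as [A|[A|A]].
  2:{ exact (HNE 2 3 4 ltac:(lia) ltac:(lia) ltac:(lia) ltac:(lia) ltac:(lia) ltac:(lia) ltac:(lia) (eq_sym A)). }
  -
    assert (a1 : forall q, InL n 4 2 q -> V 3 4 q <r V 2 3 q).
    { intros q Hq. apply (proj2 (HADJ 2 3 4 ltac:(lia) ltac:(lia) ltac:(lia) ltac:(lia) 4 q ltac:(inl) Hq)). lra. }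
    assert (a2 : forall w, (5 <= w <= n)%nat -> V 2 3 w <r Y w).
    { intros w Hw. destruct (Rtotal_order (V 2 3 w) (Y w)) as [h|[h|h]]; auto; exfalso.
      - exact (HNE 2 3 w ltac:(lia) ltac:(lia) ltac:(lia) ltac:(lia) ltac:(lia) ltac:(lia) ltac:(lia) h).
      - apply g3. apply (gt1_mk _ 4 w); unfold Dn; [split; [lia|lra] | split; [lia|lra] | lia]. }
    assert (a3 : forall w, (5 <= w <= n)%nat -> V 3 4 w <r Y w).
    { intros w Hw. pose proof (a1 w ltac:(inl)). pose proof (a2 w Hw). lra. }
    assert (a4 : card_gt1 (Dn n V Y 4 5)).
    { apply (HNL 3 4 5); try lia. apply a3; lia. }
    assert (a5 : ~ card_gt1 (Up n V Y 4 5)) by (intro; apply (HNS 4 5); auto; lia).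
    assert (a6 : V 1 4 5 <r Y 5).
    { destruct (Rtotal_order (V 1 4 5) (Y 5)) as [h|[h|h]]; auto; exfalso.
      - exact (HNE 1 4 5 ltac:(lia) ltac:(lia) ltac:(lia) ltac:(lia) ltac:(lia) ltac:(lia) ltac:(lia) h).
      - apply a5. apply (HNU 1 4 5); auto; lia. }
    assert (a7 : forall q, InL n 5 3 q -> V 3 4 q <r V 4 5 q).
    { intros q Hq. apply (proj1 (HADJ 3 4 5 ltac:(lia) ltac:(lia) ltac:(lia) ltac:(lia) 5 q ltac:(inl) Hq)).
      pose proof (a3 5 ltac:(lia)). lra. }
    assert (a8 : forall q, InL n 5 1 q -> V 1 4 q <r V 4 5 q).
    { intros q Hq. apply (proj1 (HADJ 1 4 5 ltac:(lia) ltac:(lia) ltac:(lia) ltac:(lia) 5 q ltac:(inl) Hq)). lra. }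
    assert (a9 : Y 4 <r V 1 2 4) by (pose proof (g1 4 ltac:(inl)); lra).
    assert (a10 : ~ card_gt1 (Up n V Y 1 2)).
    { intro h. apply (HNS 1 2); try lia. split; auto.
      apply (gt1_mk _ 3 4); unfold Dn; [split; [lia|lra] | split; [lia|lra] | lia]. }
    assert (x1 : V 2 3 3 <r V 4 5 3 /\ V 4 5 4 <r V 2 3 4).
    { pose proof (a7 3 ltac:(inl)). split; lra. }
    assert (a11 : Y 2 <r V 4 5 2).
    { destruct (Rtotal_order (V 4 5 2) (Y 2)) as [h|[h|h]]; auto; exfalso.
      - apply (HCR2 2 3 4 5 ltac:(lia) ltac:(lia) ltac:(lia) ltac:(lia) ltac:(lia) 5 2 3 4 ltac:(inl) ltac:(inl) ltac:(lia) ltac:(lia)).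
        pose proof (a2 5 ltac:(lia)). split; auto. split; lra.
      - exact (HNE 4 5 2 ltac:(lia) ltac:(lia) ltac:(lia) ltac:(lia) ltac:(lia) ltac:(lia) ltac:(lia) h). }
    assert (x2 : V 1 2 2 <r V 4 5 2 /\ V 4 5 4 <r V 1 2 4) by (split; lra).
    assert (a12 : V 1 2 1 <r V 4 5 1) by (pose proof (a8 1 ltac:(inl)); lra).
    destruct (Rtotal_order (Y 4) (V 5 6 4)) as [B|[B|B]].
    2:{ exact (HNE 5 6 4 ltac:(lia) ltac:(lia) ltac:(lia) ltac:(lia) ltac:(lia) ltac:(lia) ltac:(lia) (eq_sym B)). }
    +
      assert (c1 : V 4 5 6 <r Y 6).
      { pose proof (proj1 (HADJ 4 5 6 ltac:(lia) ltac:(lia) ltac:(lia) ltac:(lia) 4 6 ltac:(inl) ltac:(inl)) ltac:(lra)). lra. }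
      assert (c2 : V 1 2 6 <=r V 4 5 6).
      { destruct (Rle_or_lt (V 1 2 6) (V 4 5 6)) as [h|h]; auto; exfalso.
        apply (HCR2 1 2 4 5 ltac:(lia) ltac:(lia) ltac:(lia) ltac:(lia) ltac:(lia) 1 6 2 4 ltac:(inl) ltac:(inl) ltac:(lia) ltac:(lia)).
        split; split; lra. }
      destruct (Rtotal_order (V 1 2 5) (Y 5)) as [h|[h|h]].
      * apply a10. apply (gt1_mk _ 5 6); unfold Up; [split; [lia|lra] | split; [lia|lra] | lia].
      * exact (HNE 1 2 5 ltac:(lia) ltac:(lia) ltac:(lia) ltac:(lia) ltac:(lia) ltac:(lia) ltac:(lia) h).
      * apply (HCR2 1 2 4 5 ltac:(lia) ltac:(lia) ltac:(lia) ltac:(lia) ltac:(lia) 1 5 2 4 ltac:(inl) ltac:(inl) ltac:(lia) ltac:(lia)).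
        split; split; lra.
    +
      assert (x3 : V 3 4 5 <r V 5 6 5 /\ V 5 6 4 <r V 3 4 4) by (pose proof (a3 5 ltac:(lia)); split; lra).
      assert (d : V 5 6 3 <r Y 3).
      { destruct (Rtotal_order (V 5 6 3) (Y 3)) as [h|[h|h]]; auto; exfalso.
        - exact (HNE 5 6 3 ltac:(lia) ltac:(lia) ltac:(lia) ltac:(lia) ltac:(lia) ltac:(lia) ltac:(lia) h).
        - apply (proj1 (HCR3 2 3 5 6 ltac:(lia) ltac:(lia) ltac:(lia) ltac:(lia) ltac:(lia) 3 4 5 ltac:(lia) ltac:(lia) ltac:(lia) ltac:(lia))).
          pose proof (a2 5 ltac:(lia)). split; split; lra. }
      apply (HCR2 3 4 5 6 ltac:(lia) ltac:(lia) ltac:(lia) ltac:(lia) ltac:(lia) 6 3 5 4 ltac:(inl) ltac:(inl) ltac:(lia) ltac:(lia)).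
      pose proof (a3 6 ltac:(lia)). split; split; lra.
  -
    assert (b1 : forall q, InL n 4 2 q -> V 2 3 q <r V 3 4 q).
    { intros q Hq. apply (proj1 (HADJ 2 3 4 ltac:(lia) ltac:(lia) ltac:(lia) ltac:(lia) 4 q ltac:(inl) Hq)). lra. }
    assert (b2 : card_gt1 (Dn n V Y 3 4)) by (apply (HNL 2 3 4); auto; lia).
    assert (b3 : ~ card_gt1 (Up n V Y 3 4)) by (intro; apply (HNS 3 4); auto; lia).
    assert (b4 : V 1 3 4 <r Y 4).
    { destruct (Rtotal_order (V 1 3 4) (Y 4)) as [h|[h|h]]; auto; exfalso.
      - exact (HNE 1 3 4 ltac:(lia) ltac:(lia) ltac:(lia) ltac:(lia) ltac:(lia) ltac:(lia) ltac:(lia) h).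
      - apply b3. apply (HNU 1 3 4); auto; lia. }
    assert (b5 : forall q, InL n 4 1 q -> V 1 3 q <r V 3 4 q).
    { intros q Hq. apply (proj1 (HADJ 1 3 4 ltac:(lia) ltac:(lia) ltac:(lia) ltac:(lia) 4 q ltac:(inl) Hq)). lra. }
    assert (x4 : V 1 2 2 <r V 3 4 2 /\ V 3 4 3 <r V 1 2 3).
    { pose proof (b1 2 ltac:(inl)). split; lra. }
    destruct (Rtotal_order (Y 4) (V 1 2 4)) as [B|[B|B]].
    2:{ exact (HNE 1 2 4 ltac:(lia) ltac:(lia) ltac:(lia) ltac:(lia) ltac:(lia) ltac:(lia) ltac:(lia) (eq_sym B)). }
    +
      apply (HCR2 1 2 3 4 ltac:(lia) ltac:(lia) ltac:(lia) ltac:(lia) ltac:(lia) 1 4 2 3 ltac:(inl) ltac:(inl) ltac:(lia) ltac:(lia)).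
      pose proof (b5 1 ltac:(inl)). split; auto. split; lra.
    +
      assert (b6 : forall p, InL n 4 1 p -> V 1 2 p <=r V 3 4 p).
      { intros p Hp. destruct (Rle_or_lt (V 1 2 p) (V 3 4 p)) as [h|h]; auto; exfalso.
        apply (HCR2 1 2 3 4 ltac:(lia) ltac:(lia) ltac:(lia) ltac:(lia) ltac:(lia) 4 p 2 3 ltac:(inl) Hp ltac:(lia) ltac:(lia)).
        split; auto. split; lra. }
      destruct (Rtotal_order (Y 5) (V 1 2 5)) as [C|[C|C]].
      2:{ exact (HNE 1 2 5 ltac:(lia) ltac:(lia) ltac:(lia) ltac:(lia) ltac:(lia) ltac:(lia) ltac:(lia) (eq_sym C)). }
      *
        assert (b7 : Y 5 <r V 3 4 5) by (pose proof (b6 5 ltac:(inl)); lra).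
        assert (b8 : V 4 5 3 <r Y 3).
        { pose proof (proj2 (HADJ 3 4 5 ltac:(lia) ltac:(lia) ltac:(lia) ltac:(lia) 5 3 ltac:(inl) ltac:(inl)) ltac:(lra)). lra. }
        assert (x5 : V 2 3 4 <r V 4 5 4 /\ V 4 5 3 <r V 2 3 3) by (split; lra).
        destruct (Rtotal_order (V 2 3 5) (Y 5)) as [D|[D|D]].
        2:{ exact (HNE 2 3 5 ltac:(lia) ltac:(lia) ltac:(lia) ltac:(lia) ltac:(lia) ltac:(lia) ltac:(lia) D). }
        -- assert (e1 : Y 2 <r V 4 5 2).
           { destruct (Rtotal_order (V 4 5 2) (Y 2)) as [h|[h|h]]; auto; exfalso.
             - apply (HCR2 2 3 4 5 ltac:(lia) ltac:(lia) ltac:(lia) ltac:(lia) ltac:(lia) 5 2 4 3 ltac:(inl) ltac:(inl) ltac:(lia) ltac:(lia)).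
               split; auto. split; lra.
             - exact (HNE 4 5 2 ltac:(lia) ltac:(lia) ltac:(lia) ltac:(lia) ltac:(lia) ltac:(lia) ltac:(lia) h). }
           apply (proj1 (HCR3 1 2 4 5 ltac:(lia) ltac:(lia) ltac:(lia) ltac:(lia) ltac:(lia) 2 3 4 ltac:(lia) ltac:(lia) ltac:(lia) ltac:(lia))).
           split; split; lra.
        -- assert (b9 : ~ card_gt1 (Up n V Y 1 2)).
           { intro h. apply (HNS 1 2); try lia. split; auto.
             apply (gt1_mk _ 3 5); unfold Dn; [split; [lia|lra] | split; [lia|lra] | lia]. }
           destruct (Rtotal_order (V 5 6 4) (Y 4)) as [F|[F|F]].
           2:{ exact (HNE 5 6 4 ltac:(lia) ltac:(lia) ltac:(lia) ltac:(lia) ltac:(lia) ltac:(lia) ltac:(lia) F). }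
           ++
              assert (f1 : V 5 6 6 <r V 4 5 6).
              { apply (proj2 (HADJ 4 5 6 ltac:(lia) ltac:(lia) ltac:(lia) ltac:(lia) 4 6 ltac:(inl) ltac:(inl))). lra. }
              assert (f2 : V 4 5 6 <=r V 2 3 6).
              { destruct (Rle_or_lt (V 4 5 6) (V 2 3 6)) as [h|h]; auto; exfalso.
                apply (HCR2 2 3 4 5 ltac:(lia) ltac:(lia) ltac:(lia) ltac:(lia) ltac:(lia) 6 5 4 3 ltac:(inl) ltac:(inl) ltac:(lia) ltac:(lia)).
                split; auto. split; lra. }
              apply g3. apply (gt1_mk _ 5 6); unfold Dn; [split; [lia|lra] | split; [lia|lra] | lia].
           ++
              assert (x6 : V 3 4 4 <r V 5 6 4 /\ V 5 6 5 <r V 3 4 5) by (split; lra).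
              assert (h1 : Y 3 <r V 5 6 3).
              { destruct (Rtotal_order (V 5 6 3) (Y 3)) as [h|[h|h]]; auto; exfalso.
                - apply (proj2 (HCR3 2 3 5 6 ltac:(lia) ltac:(lia) ltac:(lia) ltac:(lia) ltac:(lia) 3 4 5 ltac:(lia) ltac:(lia) ltac:(lia) ltac:(lia))).
                  split; split; lra.
                - exact (HNE 5 6 3 ltac:(lia) ltac:(lia) ltac:(lia) ltac:(lia) ltac:(lia) ltac:(lia) ltac:(lia) h). }
              assert (k1 : V 3 4 6 <=r V 5 6 6).
              { destruct (Rle_or_lt (V 3 4 6) (V 5 6 6)) as [h|h]; auto; exfalso.
                apply (HCR2 3 4 5 6 ltac:(lia) ltac:(lia) ltac:(lia) ltac:(lia) ltac:(lia) 3 6 4 5 ltac:(inl) ltac:(inl) ltac:(lia) ltac:(lia)).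
                split; split; lra. }
              pose proof (b6 6 ltac:(inl)).
              assert (k2 : V 1 2 6 <r Y 6).
              { destruct (Rtotal_order (V 1 2 6) (Y 6)) as [h|[h|h]]; auto; exfalso.
                - exact (HNE 1 2 6 ltac:(lia) ltac:(lia) ltac:(lia) ltac:(lia) ltac:(lia) ltac:(lia) ltac:(lia) h).
                - lra. }
              apply b9. apply (gt1_mk _ 4 6); unfold Up; [split; [lia|lra] | split; [lia|lra] | lia].
      *
        destruct (Rtotal_order (Y 5) (V 3 4 5)) as [D|[D|D]].
        2:{ exact (HNE 3 4 5 ltac:(lia) ltac:(lia) ltac:(lia) ltac:(lia) ltac:(lia) ltac:(lia) ltac:(lia) (eq_sym D)). }
        --
           assert (b8 : V 4 5 3 <r Y 3).
           { pose proof (proj2 (HADJ 3 4 5 ltac:(lia) ltac:(lia) ltac:(lia) ltac:(lia) 5 3 ltac:(inl) ltac:(inl)) ltac:(lra)). lra. }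
           assert (x5 : V 2 3 4 <r V 4 5 4 /\ V 4 5 3 <r V 2 3 3) by (split; lra).
           assert (x7 : V 1 2 4 <r V 4 5 4 /\ V 4 5 3 <r V 1 2 3) by (split; lra).
           assert (m1 : Y 1 <r V 4 5 1).
           { destruct (Rtotal_order (V 4 5 1) (Y 1)) as [h|[h|h]]; auto; exfalso.
             - apply (HCR2 1 2 4 5 ltac:(lia) ltac:(lia) ltac:(lia) ltac:(lia) ltac:(lia) 5 1 4 3 ltac:(inl) ltac:(inl) ltac:(lia) ltac:(lia)).
               split; auto. split; lra.
             - exact (HNE 4 5 1 ltac:(lia) ltac:(lia) ltac:(lia) ltac:(lia) ltac:(lia) ltac:(lia) ltac:(lia) h). }
           pose proof (g1 1 ltac:(inl)).
           assert (m3 : Y 2 <r V 4 5 2).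
           { destruct (Rtotal_order (V 4 5 2) (Y 2)) as [h|[h|h]]; auto; exfalso.
             - apply (HCR2 2 3 4 5 ltac:(lia) ltac:(lia) ltac:(lia) ltac:(lia) ltac:(lia) 1 2 4 3 ltac:(inl) ltac:(inl) ltac:(lia) ltac:(lia)).
               split; auto. split; lra.
             - exact (HNE 4 5 2 ltac:(lia) ltac:(lia) ltac:(lia) ltac:(lia) ltac:(lia) ltac:(lia) ltac:(lia) h). }
           apply (proj1 (HCR3 1 2 4 5 ltac:(lia) ltac:(lia) ltac:(lia) ltac:(lia) ltac:(lia) 2 3 4 ltac:(lia) ltac:(lia) ltac:(lia) ltac:(lia))).
           split; split; lra.
        --
           assert (n1 : forall q, InL n 5 3 q -> V 3 4 q <r V 4 5 q).
           { intros q Hq. apply (proj1 (HADJ 3 4 5 ltac:(lia) ltac:(lia) ltac:(lia) ltac:(lia) 5 q ltac:(inl) Hq)). lra. }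
           assert (n2 : forall w, (6 <= w <= n)%nat -> Y w <r V 3 4 w).
           { intros w Hw. destruct (Rtotal_order (V 3 4 w) (Y w)) as [h|[h|h]]; auto; exfalso.
             - apply (HNS 3 4); try lia. split; auto.
               apply (gt1_mk _ 5 w); unfold Up; [split; [lia|lra] | split; [lia|lra] | lia].
             - exact (HNE 3 4 w ltac:(lia) ltac:(lia) ltac:(lia) ltac:(lia) ltac:(lia) ltac:(lia) ltac:(lia) h). }
           destruct (Rtotal_order (Y 4) (V 5 6 4)) as [F|[F|F]].
           2:{ exact (HNE 5 6 4 ltac:(lia) ltac:(lia) ltac:(lia) ltac:(lia) ltac:(lia) ltac:(lia) ltac:(lia) (eq_sym F)). }
           ++ pose proof (proj1 (HADJ 4 5 6 ltac:(lia) ltac:(lia) ltac:(lia) ltac:(lia) 4 6 ltac:(inl) ltac:(inl)) ltac:(lra)).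
              pose proof (n1 6 ltac:(inl)). pose proof (n2 6 ltac:(lia)). lra.
           ++ assert (x8 : V 3 4 5 <r V 5 6 5 /\ V 5 6 4 <r V 3 4 4) by (split; lra).
              assert (o1 : V 5 6 3 <r Y 3).
              { destruct (Rtotal_order (V 5 6 3) (Y 3)) as [h|[h|h]]; auto; exfalso.
                - exact (HNE 5 6 3 ltac:(lia) ltac:(lia) ltac:(lia) ltac:(lia) ltac:(lia) ltac:(lia) ltac:(lia) h).
                - apply (HCR2 3 4 5 6 ltac:(lia) ltac:(lia) ltac:(lia) ltac:(lia) ltac:(lia) 3 6 5 4 ltac:(inl) ltac:(inl) ltac:(lia) ltac:(lia)).
                  pose proof (n2 6 ltac:(lia)). split; auto. split; lra. }
              pose proof (g1 5 ltac:(inl)).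
              assert (x9 : V 2 3 5 <r V 5 6 5 /\ V 5 6 3 <r V 2 3 3) by (split; lra).
              assert (x10 : V 1 2 5 <r V 5 6 5 /\ V 5 6 3 <r V 1 2 3) by (split; lra).
              assert (o2 : V 5 6 2 <r Y 2).
              { destruct (Rtotal_order (V 5 6 2) (Y 2)) as [h|[h|h]]; auto; exfalso.
                - exact (HNE 5 6 2 ltac:(lia) ltac:(lia) ltac:(lia) ltac:(lia) ltac:(lia) ltac:(lia) ltac:(lia) h).
                - apply (proj1 (HCR3 1 2 5 6 ltac:(lia) ltac:(lia) ltac:(lia) ltac:(lia) ltac:(lia) 2 3 5 ltac:(lia) ltac:(lia) ltac:(lia) ltac:(lia))).
                  split; split; lra. }
              assert (o3 : V 5 6 1 <=r V 2 3 1).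
              { destruct (Rle_or_lt (V 5 6 1) (V 2 3 1)) as [h|h]; auto; exfalso.
                apply (HCR2 2 3 5 6 ltac:(lia) ltac:(lia) ltac:(lia) ltac:(lia) ltac:(lia) 1 2 5 3 ltac:(inl) ltac:(inl) ltac:(lia) ltac:(lia)).
                split; auto. split; lra. }
              pose proof (g1 1 ltac:(inl)).
              assert (o5 : V 5 6 6 <=r V 1 2 6).
              { destruct (Rle_or_lt (V 5 6 6) (V 1 2 6)) as [h|h]; auto; exfalso.
                apply (HCR2 1 2 5 6 ltac:(lia) ltac:(lia) ltac:(lia) ltac:(lia) ltac:(lia) 6 1 5 3 ltac:(inl) ltac:(inl) ltac:(lia) ltac:(lia)).
                split; auto. split; lra. }
              assert (o6 : Y 6 <r V 1 2 6).
              { destruct (Rtotal_order (Y 6) (V 1 2 6)) as [h|[h|h]]; auto; exfalso.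
                - exact (HNE 1 2 6 ltac:(lia) ltac:(lia) ltac:(lia) ltac:(lia) ltac:(lia) ltac:(lia) ltac:(lia) (eq_sym h)).
                - lra. }
              apply (HNS 1 2); try lia. split.
              ** apply (gt1_mk _ 4 5); unfold Up; [split; [lia|lra] | split; [lia|lra] | lia].
              ** apply (gt1_mk _ 3 6); unfold Dn; [split; [lia|lra] | split; [lia|lra] | lia].
Qed.

Open Scope R_scope.

Lemma card_gt1_iff : forall (P Q : nat -> Prop), (forall s, P s <-> Q s) -> card_gt1 P -> card_gt1 Q.
Proof. intros P Q H [a [b [h1 [h2 h3]]]]. exists a, b. repeat split; auto; apply H; auto. Qed.

Lemma core_neg (n : nat) (V : nat -> nat -> nat -> R) (Y : nat -> R) :
  core_hyps n V Y -> core_hyps n (fun i j p => - V i j p) (fun s => - Y s).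
Proof.
  intros [HE [HNE [HADJ [HCR2 [HCR3 [HNS [HNU HNL]]]]]]].
  assert (UD : forall i j s, Up n (fun i j p => - V i j p) (fun s => - Y s) i j s <-> Dn n V Y i j s).
  { intros i j s. unfold Up, Dn. split; intros [h1 h2]; split; auto; lra. }
  assert (DU : forall i j s, Dn n (fun i j p => - V i j p) (fun s => - Y s) i j s <-> Up n V Y i j s).
  { intros i j s. unfold Up, Dn. split; intros [h1 h2]; split; auto; lra. }
  split; [|split; [|split; [|split; [|split; [|split; [|split]]]]]].
  - intros i j h1 h2 h3. destruct (HE i j h1 h2 h3). split; lra.
  - intros i j s h1 h2 h3 h4 h5 h6 h7 h. apply (HNE i j s h1 h2 h3 h4 h5 h6 h7). lra.
  - intros i j k h1 h2 h3 h4 p q hp hq.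
    destruct (HADJ i j k h1 h2 h3 h4 p q hp hq) as [u v]. split; intro; [pose proof (v ltac:(lra))|pose proof (u ltac:(lra))]; lra.
  - intros i j k l h1 h2 h3 h4 h5 p1 p2 q1 q2 r1 r2 r3 r4 [[a1 a2] [b1 b2]].
    apply (HCR2 i j k l h1 h2 h3 h4 h5 p2 p1 q2 q1 r2 r1 r4 r3). lra.
  - intros i j k l h1 h2 h3 h4 h5 a b c r1 r2 r3 r4.
    destruct (HCR3 i j k l h1 h2 h3 h4 h5 a b c r1 r2 r3 r4) as [u v]. split.
    + intros [[a1 a2] [b1 b2]]. apply v. lra.
    + intros [[a1 a2] [b1 b2]]. apply u. lra.
  - intros i j h1 h2 h3 [u v]. apply (HNS i j h1 h2 h3). split.
    + eapply card_gt1_iff; [|exact v]. intro s. apply DU.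
    + eapply card_gt1_iff; [|exact u]. intro s. apply UD.
  - intros i j k h1 h2 h3 h4 h. eapply card_gt1_iff; [intro s; symmetry; apply UD|]. apply (HNL i j k h1 h2 h3 h4). lra.
  - intros i j k h1 h2 h3 h4 h. eapply card_gt1_iff; [intro s; symmetry; apply DU|]. apply (HNU i j k h1 h2 h3 h4). lra.
Qed.

Open Scope R_scope.

Definition par (vx : nat -> R) (j p : nat) : R := if (j <=? p)%nat then vx p else 1 + vx p.
Definition val (vx : nat -> R) (ef : nat -> nat -> R -> R) (i j p : nat) : R := ef i j (par vx j p).

Lemma par_ge : forall vx j p, (j <= p)%nat -> par vx j p = vx p.
Proof. intros. unfold par. destruct (Nat.leb_spec j p); [auto|lia]. Qed.
Lemma par_lt : forall vx j p, (p < j)%nat -> par vx j p = 1 + vx p.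
Proof. intros. unfold par. destruct (Nat.leb_spec j p); [lia|auto]. Qed.


Lemma vx_in : forall n vx vy ef, is_flag n vx vy ef -> forall s, (1 <= s <= n)%nat -> 0 < vx s < 1.
Proof. intros n vx vy ef HF. apply (proj1 HF). Qed.

Lemma vx_lt : forall n vx vy ef, is_flag n vx vy ef -> forall a b, (1 <= a)%nat -> (a < b)%nat -> (b <= n)%nat -> vx a < vx b.
Proof. intros n vx vy ef HF. apply (proj1 (proj2 HF)). Qed.

Lemma vx_le : forall n vx vy ef, is_flag n vx vy ef -> forall a b, (1 <= a)%nat -> (a <= b)%nat -> (b <= n)%nat -> vx a <= vx b.
Proof.
  intros n vx vy ef HF a b h1 h2 h3. destruct (Nat.eq_dec a b) as [->|hne]; [lra|].
  left. eapply vx_lt; eauto. lia.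
Qed.

Lemma edge_ends : forall n vx vy ef, is_flag n vx vy ef -> forall i j, is_edge n i j ->
  ef i j (vx j) = vy j /\ ef i j (1 + vx i) = vy i /\ cont_on (ef i j) (vx j) (1 + vx i).
Proof. intros n vx vy ef HF. apply (proj1 (proj2 (proj2 HF))). Qed.

Lemma no_through : forall n vx vy ef, is_flag n vx vy ef -> forall i j s, is_edge n i j -> (1 <= s <= n)%nat -> s <> i -> s <> j ->
  ~ on_edge vx ef i j (vx s) (vy s).
Proof. intros n vx vy ef HF. apply (proj1 (proj2 (proj2 (proj2 HF)))). Qed.

Lemma one_common : forall n vx vy ef, is_flag n vx vy ef -> forall i j k l, is_edge n i j -> is_edge n k l -> (i, j) <> (k, l) ->
  forall x y x' y', on_edge vx ef i j x y -> on_edge vx ef k l x y ->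
        on_edge vx ef i j x' y' -> on_edge vx ef k l x' y' -> x = x'.
Proof.
  intros n vx vy ef HF i j k l h1 h2 h3 x y x' y' a b c d.
  destruct (proj2 (proj2 (proj2 (proj2 HF))) i j k l h1 h2 h3) as [H _].
  apply (H x y x' y' a b c d).
Qed.

Lemma hE : forall n vx vy ef, is_flag n vx vy ef -> forall i j, (1 <= i)%nat -> (i < j)%nat -> (j <= n)%nat ->
  val vx ef i j j = vy j /\ val vx ef i j i = vy i.
Proof.
  intros n vx vy ef HF i j h1 h2 h3. unfold val.
  destruct (edge_ends n vx vy ef HF i j ltac:(unfold is_edge; lia)) as [e1 [e2 _]].
  rewrite par_ge by lia. rewrite par_lt by lia. auto.
Qed.

Lemma hNE : forall n vx vy ef, is_flag n vx vy ef ->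
  forall i j s, (1 <= i)%nat -> (i < j)%nat -> (j <= n)%nat -> (1 <= s <= n)%nat ->
      s <> i -> s <> j -> (j < s \/ s < i)%nat -> val vx ef i j s <> vy s.
Proof.
  intros n vx vy ef HF i j s h1 h2 h3 h4 h5 h6 h7 E.
  apply (no_through n vx vy ef HF i j s ltac:(unfold is_edge; lia) h4 h5 h6).
  pose proof (vx_in n vx vy ef HF s h4) as Hs.
  pose proof (vx_in n vx vy ef HF i ltac:(lia)) as Hi.
  pose proof (vx_in n vx vy ef HF j ltac:(lia)) as Hj.
  exists (par vx j s). unfold val in E.
  destruct h7 as [h7|h7].
  - rewrite par_ge in * by lia.
    pose proof (vx_lt n vx vy ef HF j s ltac:(lia) h7 ltac:(lia)).
    split; [lra|]. split; [apply fp_lt1; lra|auto].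
  - rewrite par_lt in * by lia.
    pose proof (vx_lt n vx vy ef HF s i ltac:(lia) h7 ltac:(lia)).
    split; [lra|]. split; [apply fp_1plus; lra|auto].
Qed.

Lemma inl_par : forall n vx vy ef, is_flag n vx vy ef -> forall i j l p,
  (1 <= i)%nat -> (i < j)%nat -> (j <= l)%nat -> (l <= n)%nat ->
  ((l <= p <= n)%nat \/ (1 <= p <= i)%nat) ->
  par vx j p = par vx l p /\ vx l <= par vx l p <= 1 + vx i.
Proof.
  intros n vx vy ef HF i j l p h1 h2 h3 h4 [hp|hp].
  - rewrite !par_ge by lia.
    pose proof (vx_le n vx vy ef HF l p ltac:(lia) ltac:(lia) ltac:(lia)).
    pose proof (vx_in n vx vy ef HF p ltac:(lia)). pose proof (vx_in n vx vy ef HF i ltac:(lia)).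
    split; auto. split; lra.
  - rewrite !par_lt by lia.
    pose proof (vx_le n vx vy ef HF p i ltac:(lia) ltac:(lia) ltac:(lia)).
    pose proof (vx_in n vx vy ef HF p ltac:(lia)). pose proof (vx_in n vx vy ef HF l ltac:(lia)).
    split; auto. split; lra.
Qed.

Lemma ivt_any : forall F a b, cont_on F a b -> forall t1 t2,
  a <= t1 <= b -> a <= t2 <= b -> F t1 < 0 -> 0 < F t2 ->
  exists t, a <= t <= b /\ (t1 <= t <= t2 \/ t2 <= t <= t1) /\ F t = 0.
Proof.
  intros F a b H t1 t2 h1 h2 f1 f2.
  destruct (Rle_or_lt t1 t2) as [h|h].
  - destruct (ivt_on F a b H t1 t2 ltac:(lra) h ltac:(lra) ltac:(left; split; auto)) as [t [ht ft]].
    exists t. split; [lra|]. split; auto.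
  - destruct (ivt_on F a b H t2 t1 ltac:(lra) ltac:(lra) ltac:(lra) ltac:(right; split; auto)) as [t [ht ft]].
    exists t. split; [lra|]. split; auto.
Qed.

Lemma adj_nz : forall n vx vy ef, is_flag n vx vy ef -> forall i j k,
  (1 <= i)%nat -> (i < j)%nat -> (j < k)%nat -> (k <= n)%nat ->
  forall t, vx k <= t <= 1 + vx i -> ef i j t <> ef j k t.
Proof.
  intros n vx vy ef HF i j k h1 h2 h3 h4 t ht E.
  pose proof (vx_in n vx vy ef HF i ltac:(lia)) as Hi.
  pose proof (vx_in n vx vy ef HF j ltac:(lia)) as Hj.
  pose proof (vx_in n vx vy ef HF k ltac:(lia)) as Hk.
  pose proof (vx_lt n vx vy ef HF i j ltac:(lia) h2 ltac:(lia)).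
  pose proof (vx_lt n vx vy ef HF j k ltac:(lia) h3 ltac:(lia)).
  destruct (edge_ends n vx vy ef HF i j ltac:(unfold is_edge; lia)) as [e1 [e2 _]].
  destruct (edge_ends n vx vy ef HF j k ltac:(unfold is_edge; lia)) as [e3 [e4 _]].
  assert (X : frac_part t = vx j).
  { apply (one_common n vx vy ef HF i j j k ltac:(unfold is_edge; lia) ltac:(unfold is_edge; lia)
      ltac:(intro hh; injection hh; lia) (frac_part t) (ef i j t) (vx j) (vy j)).
    - exists t. split; [lra|]. auto.
    - exists t. split; [lra|]. auto.
    - exists (vx j). split; [lra|]. split; [apply fp_lt1; lra|auto].
    - exists (1 + vx j). split; [lra|]. split; [apply fp_1plus; lra|auto]. }
  destruct (fp_cases t ltac:(lra)) as [[a b]|[a b]]; lra.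
Qed.

Lemma adj_cont : forall n vx vy ef, is_flag n vx vy ef -> forall i j k,
  (1 <= i)%nat -> (i < j)%nat -> (j < k)%nat -> (k <= n)%nat ->
  cont_on (fun t => ef i j t - ef j k t) (vx k) (1 + vx i).
Proof.
  intros n vx vy ef HF i j k h1 h2 h3 h4.
  pose proof (vx_in n vx vy ef HF i ltac:(lia)) as Hi.
  pose proof (vx_in n vx vy ef HF j ltac:(lia)) as Hj.
  pose proof (vx_in n vx vy ef HF k ltac:(lia)) as Hk.
  pose proof (vx_lt n vx vy ef HF i j ltac:(lia) h2 ltac:(lia)).
  pose proof (vx_lt n vx vy ef HF j k ltac:(lia) h3 ltac:(lia)).
  destruct (edge_ends n vx vy ef HF i j ltac:(unfold is_edge; lia)) as [_ [_ c1]].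
  destruct (edge_ends n vx vy ef HF j k ltac:(unfold is_edge; lia)) as [_ [_ c2]].
  apply cont_on_minus; eapply cont_on_sub; eauto; lra.
Qed.

Lemma adj_same : forall n vx vy ef, is_flag n vx vy ef -> forall i j k,
  (1 <= i)%nat -> (i < j)%nat -> (j < k)%nat -> (k <= n)%nat ->
  forall t1 t2, vx k <= t1 <= 1 + vx i -> vx k <= t2 <= 1 + vx i ->
  ~ (ef i j t1 < ef j k t1 /\ ef j k t2 < ef i j t2).
Proof.
  intros n vx vy ef HF i j k h1 h2 h3 h4 t1 t2 r1 r2 [a b].
  destruct (ivt_any _ _ _ (adj_cont n vx vy ef HF i j k h1 h2 h3 h4) t1 t2 r1 r2 ltac:(lra) ltac:(lra))
    as [t [ht [_ ft]]].
  apply (adj_nz n vx vy ef HF i j k h1 h2 h3 h4 t ht). lra.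
Qed.

Lemma hADJ : forall n vx vy ef, is_flag n vx vy ef -> forall i j k,
  (1 <= i)%nat -> (i < j)%nat -> (j < k)%nat -> (k <= n)%nat ->
  forall p q, ((k <= p <= n)%nat \/ (1 <= p <= i)%nat) -> ((k <= q <= n)%nat \/ (1 <= q <= i)%nat) ->
  (val vx ef i j p < val vx ef j k p -> val vx ef i j q < val vx ef j k q) /\
  (val vx ef j k p < val vx ef i j p -> val vx ef j k q < val vx ef i j q).
Proof.
  intros n vx vy ef HF i j k h1 h2 h3 h4 p q hp hq.
  destruct (inl_par n vx vy ef HF i j k p h1 h2 ltac:(lia) h4 hp) as [ep rp].
  destruct (inl_par n vx vy ef HF i j k q h1 h2 ltac:(lia) h4 hq) as [eq rq].
  unfold val. rewrite ep, eq.
  pose proof (adj_same n vx vy ef HF i j k h1 h2 h3 h4 _ _ rp rq) as S1.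
  pose proof (adj_same n vx vy ef HF i j k h1 h2 h3 h4 _ _ rq rp) as S2.
  pose proof (adj_nz n vx vy ef HF i j k h1 h2 h3 h4 _ rq) as N.
  split; intro h.
  - destruct (Rtotal_order (ef i j (par vx k q)) (ef j k (par vx k q))) as [u|[u|u]]; auto.
    + exfalso; auto.
    + exfalso. apply S1. split; auto.
  - destruct (Rtotal_order (ef i j (par vx k q)) (ef j k (par vx k q))) as [u|[u|u]]; auto.
    + exfalso. apply S2. split; auto.
    + exfalso; auto.
Qed.

Ltac flagfacts n vx vy ef HF i j k l :=
  pose proof (vx_in n vx vy ef HF i ltac:(lia));
  pose proof (vx_in n vx vy ef HF j ltac:(lia));
  pose proof (vx_in n vx vy ef HF k ltac:(lia));
  pose proof (vx_in n vx vy ef HF l ltac:(lia));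
  pose proof (vx_lt n vx vy ef HF i j ltac:(lia) ltac:(lia) ltac:(lia));
  pose proof (vx_lt n vx vy ef HF j k ltac:(lia) ltac:(lia) ltac:(lia));
  pose proof (vx_lt n vx vy ef HF k l ltac:(lia) ltac:(lia) ltac:(lia)).

Lemma cr_zero1 : forall n vx vy ef, is_flag n vx vy ef -> forall i j k l,
  (1 <= i)%nat -> (i < j)%nat -> (j < k)%nat -> (k < l)%nat -> (l <= n)%nat ->
  forall p1 p2, ((l <= p1 <= n)%nat \/ (1 <= p1 <= i)%nat) -> ((l <= p2 <= n)%nat \/ (1 <= p2 <= i)%nat) ->
  val vx ef i j p1 < val vx ef k l p1 -> val vx ef k l p2 < val vx ef i j p2 ->
  exists t, vx l <= t <= 1 + vx i /\ ef i j t = ef k l t.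
Proof.
  intros n vx vy ef HF i j k l h1 h2 h3 h4 h5 p1 p2 hp1 hp2 a b.
  flagfacts n vx vy ef HF i j k l.
  destruct (inl_par n vx vy ef HF i j l p1 h1 h2 ltac:(lia) h5 hp1) as [e1 r1].
  destruct (inl_par n vx vy ef HF i j l p2 h1 h2 ltac:(lia) h5 hp2) as [e2 r2].
  unfold val in a, b. rewrite e1 in a. rewrite e2 in b.
  destruct (edge_ends n vx vy ef HF i j ltac:(unfold is_edge; lia)) as [_ [_ c1]].
  destruct (edge_ends n vx vy ef HF k l ltac:(unfold is_edge; lia)) as [_ [_ c2]].
  assert (C : cont_on (fun t => ef i j t - ef k l t) (vx l) (1 + vx i)).
  { apply cont_on_minus; eapply cont_on_sub; eauto; lra. }
  destruct (ivt_any _ _ _ C _ _ r1 r2 ltac:(lra) ltac:(lra)) as [t [ht [_ ft]]].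
  exists t. split; auto. lra.
Qed.

Lemma cr_cont2 : forall n vx vy ef, is_flag n vx vy ef -> forall i j k l,
  (1 <= i)%nat -> (i < j)%nat -> (j < k)%nat -> (k < l)%nat -> (l <= n)%nat ->
  cont_on (fun x => ef i j x - ef k l (1 + x)) (vx j) (vx k).
Proof.
  intros n vx vy ef HF i j k l h1 h2 h3 h4 h5.
  flagfacts n vx vy ef HF i j k l.
  destruct (edge_ends n vx vy ef HF i j ltac:(unfold is_edge; lia)) as [_ [_ c1]].
  destruct (edge_ends n vx vy ef HF k l ltac:(unfold is_edge; lia)) as [_ [_ c2]].
  apply cont_on_minus.
  - eapply cont_on_sub; eauto; lra.
  - apply (cont_on_shift (ef k l) 1). eapply cont_on_sub; eauto; lra.
Qed.

Lemma val_arc2 : forall n vx vy ef, is_flag n vx vy ef -> forall i j k l q,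
  (1 <= i)%nat -> (i < j)%nat -> (j < k)%nat -> (k < l)%nat -> (l <= n)%nat -> (j <= q <= k)%nat ->
  val vx ef i j q = ef i j (vx q) /\ val vx ef k l q = ef k l (1 + vx q) /\ vx j <= vx q <= vx k.
Proof.
  intros n vx vy ef HF i j k l q h1 h2 h3 h4 h5 hq. unfold val.
  rewrite par_ge by lia. rewrite par_lt by lia. split; auto. split; auto.
  split; apply (vx_le n vx vy ef HF); lia.
Qed.

Lemma cr_zero2 : forall n vx vy ef, is_flag n vx vy ef -> forall i j k l,
  (1 <= i)%nat -> (i < j)%nat -> (j < k)%nat -> (k < l)%nat -> (l <= n)%nat ->
  forall q1 q2, (j <= q1 <= k)%nat -> (j <= q2 <= k)%nat ->
  val vx ef i j q1 < val vx ef k l q1 -> val vx ef k l q2 < val vx ef i j q2 ->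
  exists x, vx j <= x <= vx k /\ (vx q1 <= x <= vx q2 \/ vx q2 <= x <= vx q1) /\ ef i j x = ef k l (1 + x).
Proof.
  intros n vx vy ef HF i j k l h1 h2 h3 h4 h5 q1 q2 hq1 hq2 a b.
  destruct (val_arc2 n vx vy ef HF i j k l q1 h1 h2 h3 h4 h5 hq1) as [u1 [v1 w1]].
  destruct (val_arc2 n vx vy ef HF i j k l q2 h1 h2 h3 h4 h5 hq2) as [u2 [v2 w2]].
  rewrite u1, v1 in a. rewrite u2, v2 in b.
  destruct (ivt_any _ _ _ (cr_cont2 n vx vy ef HF i j k l h1 h2 h3 h4 h5) _ _ w1 w2 ltac:(lra) ltac:(lra))
    as [t [ht [bt ft]]].
  exists t. split; auto. split; auto. lra.
Qed.

Lemma cr_common2 : forall n vx vy ef, is_flag n vx vy ef -> forall i j k l,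
  (1 <= i)%nat -> (i < j)%nat -> (j < k)%nat -> (k < l)%nat -> (l <= n)%nat ->
  forall x, vx j <= x <= vx k -> ef i j x = ef k l (1 + x) ->
  on_edge vx ef i j x (ef i j x) /\ on_edge vx ef k l x (ef i j x).
Proof.
  intros n vx vy ef HF i j k l h1 h2 h3 h4 h5 x hx E.
  flagfacts n vx vy ef HF i j k l. split.
  - exists x. split; [lra|]. split; [apply fp_lt1; lra|auto].
  - exists (1 + x). split; [lra|]. split; [apply fp_1plus; lra|auto].
Qed.

Lemma hCR2 : forall n vx vy ef, is_flag n vx vy ef -> forall i j k l,
  (1 <= i)%nat -> (i < j)%nat -> (j < k)%nat -> (k < l)%nat -> (l <= n)%nat ->
  forall p1 p2 q1 q2, ((l <= p1 <= n)%nat \/ (1 <= p1 <= i)%nat) -> ((l <= p2 <= n)%nat \/ (1 <= p2 <= i)%nat) ->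
  (j <= q1 <= k)%nat -> (j <= q2 <= k)%nat ->
  ~ ((val vx ef i j p1 < val vx ef k l p1 /\ val vx ef k l p2 < val vx ef i j p2) /\
     (val vx ef i j q1 < val vx ef k l q1 /\ val vx ef k l q2 < val vx ef i j q2)).
Proof.
  intros n vx vy ef HF i j k l h1 h2 h3 h4 h5 p1 p2 q1 q2 r1 r2 r3 r4 [[a b] [c d]].
  destruct (cr_zero1 n vx vy ef HF i j k l h1 h2 h3 h4 h5 p1 p2 r1 r2 a b) as [t [ht Et]].
  destruct (cr_zero2 n vx vy ef HF i j k l h1 h2 h3 h4 h5 q1 q2 r3 r4 c d) as [x [hx [_ Ex]]].
  destruct (cr_common2 n vx vy ef HF i j k l h1 h2 h3 h4 h5 x hx Ex) as [o1 o2].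
  flagfacts n vx vy ef HF i j k l.
  assert (X : frac_part t = x).
  { apply (one_common n vx vy ef HF i j k l ltac:(unfold is_edge; lia) ltac:(unfold is_edge; lia)
      ltac:(intro hh; injection hh; lia) (frac_part t) (ef i j t) x (ef i j x)); auto.
    - exists t. split; [lra|]. auto.
    - exists t. split; [lra|]. split; auto. }
  destruct (fp_cases t ltac:(lra)) as [[u v]|[u v]]; lra.
Qed.

Lemma hCR3 : forall n vx vy ef, is_flag n vx vy ef -> forall i j k l,
  (1 <= i)%nat -> (i < j)%nat -> (j < k)%nat -> (k < l)%nat -> (l <= n)%nat ->
  forall a b c, (j <= a)%nat -> (a < b)%nat -> (b < c)%nat -> (c <= k)%nat ->
  ~ ((val vx ef i j a < val vx ef k l a /\ val vx ef k l b < val vx ef i j b) /\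
     (val vx ef i j c < val vx ef k l c /\ val vx ef k l b < val vx ef i j b)) /\
  ~ ((val vx ef i j b < val vx ef k l b /\ val vx ef k l a < val vx ef i j a) /\
     (val vx ef i j b < val vx ef k l b /\ val vx ef k l c < val vx ef i j c)).
Proof.
  intros n vx vy ef HF i j k l h1 h2 h3 h4 h5 a b c r1 r2 r3 r4.
  assert (G : forall x0 x1, vx j <= x0 <= vx k -> vx j <= x1 <= vx k ->
     ef i j x0 = ef k l (1 + x0) -> ef i j x1 = ef k l (1 + x1) -> x0 = x1).
  { intros x0 x1 hx0 hx1 E0 E1.
    destruct (cr_common2 n vx vy ef HF i j k l h1 h2 h3 h4 h5 x0 hx0 E0) as [o1 o2].
    destruct (cr_common2 n vx vy ef HF i j k l h1 h2 h3 h4 h5 x1 hx1 E1) as [o3 o4].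
    apply (one_common n vx vy ef HF i j k l ltac:(unfold is_edge; lia) ltac:(unfold is_edge; lia)
      ltac:(intro hh; injection hh; lia) x0 (ef i j x0) x1 (ef i j x1)); auto. }
  pose proof (vx_lt n vx vy ef HF a b ltac:(lia) r2 ltac:(lia)).
  pose proof (vx_lt n vx vy ef HF b c ltac:(lia) r3 ltac:(lia)).
  destruct (val_arc2 n vx vy ef HF i j k l b h1 h2 h3 h4 h5 ltac:(lia)) as [ub [vb wb]].
  split; intros [[p q] [s t]].
  - destruct (cr_zero2 n vx vy ef HF i j k l h1 h2 h3 h4 h5 a b ltac:(lia) ltac:(lia) p q) as [x0 [hx0 [bx0 E0]]].
    destruct (cr_zero2 n vx vy ef HF i j k l h1 h2 h3 h4 h5 c b ltac:(lia) ltac:(lia) s t) as [x1 [hx1 [bx1 E1]]].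
    pose proof (G x0 x1 hx0 hx1 E0 E1).
    assert (x0 = vx b) by lra. subst. rewrite ub, vb in q. lra.
  - destruct (cr_zero2 n vx vy ef HF i j k l h1 h2 h3 h4 h5 b a ltac:(lia) ltac:(lia) p q) as [x0 [hx0 [bx0 E0]]].
    destruct (cr_zero2 n vx vy ef HF i j k l h1 h2 h3 h4 h5 b c ltac:(lia) ltac:(lia) s t) as [x1 [hx1 [bx1 E1]]].
    pose proof (G x0 x1 hx0 hx1 E0 E1).
    assert (x0 = vx b) by lra. subst. rewrite ub, vb in p. lra.
Qed.

Lemma onint_eq : forall n vx vy ef, is_flag n vx vy ef -> forall i j s y,
  (1 <= i)%nat -> (i < j)%nat -> (j < s)%nat -> (s <= n)%nat ->
  on_int vx ef i j (vx s) y -> y = val vx ef i j s.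
Proof.
  intros n vx vy ef HF i j s y h1 h2 h3 h4 [t [ht [ft et]]].
  pose proof (vx_in n vx vy ef HF i ltac:(lia)). pose proof (vx_in n vx vy ef HF j ltac:(lia)).
  pose proof (vx_in n vx vy ef HF s ltac:(lia)).
  pose proof (vx_lt n vx vy ef HF i s ltac:(lia) ltac:(lia) ltac:(lia)).
  unfold val. rewrite par_ge by lia.
  destruct (fp_cases t ltac:(lra)) as [[u v]|[u v]].
  - rewrite <- et. f_equal. lra.
  - lra.
Qed.

Lemma onint_mk : forall n vx vy ef, is_flag n vx vy ef -> forall i j s,
  (1 <= i)%nat -> (i < j)%nat -> (j < s)%nat -> (s <= n)%nat ->
  on_int vx ef i j (vx s) (val vx ef i j s).
Proof.
  intros n vx vy ef HF i j s h1 h2 h3 h4.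
  pose proof (vx_in n vx vy ef HF i ltac:(lia)). pose proof (vx_in n vx vy ef HF s ltac:(lia)).
  pose proof (vx_lt n vx vy ef HF j s ltac:(lia) ltac:(lia) ltac:(lia)).
  exists (vx s). unfold val. rewrite par_ge by lia. split; [lra|]. split; auto. apply fp_lt1. lra.
Qed.

Lemma Vplus_iff : forall n vx vy ef, is_flag n vx vy ef -> forall i j,
  (1 <= i)%nat -> (i < j)%nat -> forall s,
  in_Vplus n vx vy ef i j s <-> ((j < s <= n)%nat /\ val vx ef i j s < vy s).
Proof.
  intros n vx vy ef HF i j h1 h2 s. unfold in_Vplus, v_above. split.
  - intros [a [b [y [o c]]]]. rewrite (onint_eq n vx vy ef HF i j s y h1 h2 a b o) in c. split; [lia|auto].
  - intros [a b]. split; [lia|]. split; [lia|]. exists (val vx ef i j s). split; auto.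
    apply (onint_mk n vx vy ef HF); lia.
Qed.

Lemma Vminus_iff : forall n vx vy ef, is_flag n vx vy ef -> forall i j,
  (1 <= i)%nat -> (i < j)%nat -> forall s,
  in_Vminus n vx vy ef i j s <-> ((j < s <= n)%nat /\ vy s < val vx ef i j s).
Proof.
  intros n vx vy ef HF i j h1 h2 s. unfold in_Vminus, v_below. split.
  - intros [a [b [y [o c]]]]. rewrite (onint_eq n vx vy ef HF i j s y h1 h2 a b o) in c. split; [lia|auto].
  - intros [a b]. split; [lia|]. split; [lia|]. exists (val vx ef i j s). split; auto.
    apply (onint_mk n vx vy ef HF); lia.
Qed.

Lemma same_param : forall n vx vy ef, is_flag n vx vy ef -> forall i j k,
  (1 <= i)%nat -> (i < j)%nat -> (j < k)%nat -> (k <= n)%nat ->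
  forall x y1 y2, on_int vx ef j k x y1 -> on_int vx ef i j x y2 ->
  exists t, vx k < t < 1 + vx i /\ ef j k t = y1 /\ ef i j t = y2.
Proof.
  intros n vx vy ef HF i j k h1 h2 h3 h4 x y1 y2 [t1 [r1 [f1 e1]]] [t2 [r2 [f2 e2]]].
  pose proof (vx_in n vx vy ef HF i ltac:(lia)). pose proof (vx_in n vx vy ef HF j ltac:(lia)).
  pose proof (vx_in n vx vy ef HF k ltac:(lia)).
  pose proof (vx_lt n vx vy ef HF i j ltac:(lia) ltac:(lia) ltac:(lia)).
  pose proof (vx_lt n vx vy ef HF j k ltac:(lia) ltac:(lia) ltac:(lia)).
  destruct (fp_cases t1 ltac:(lra)) as [[u1 v1]|[u1 v1]];
  destruct (fp_cases t2 ltac:(lra)) as [[u2 v2]|[u2 v2]]; try lra.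
  - assert (t1 = t2) by lra. subst. exists t2. split; [lra|auto].
  - assert (t1 = t2) by lra. subst. exists t2. split; [lra|auto].
Qed.

Lemma EP_up : forall n vx vy ef, is_flag n vx vy ef -> forall i j k,
  (1 <= i)%nat -> (i < j)%nat -> (j < k)%nat -> (k <= n)%nat ->
  vy k < val vx ef i j k -> edge_prec vx ef j k i j.
Proof.
  intros n vx vy ef HF i j k h1 h2 h3 h4 H.
  pose proof (vx_in n vx vy ef HF i ltac:(lia)). pose proof (vx_in n vx vy ef HF j ltac:(lia)).
  pose proof (vx_in n vx vy ef HF k ltac:(lia)).
  pose proof (vx_lt n vx vy ef HF i j ltac:(lia) ltac:(lia) ltac:(lia)).
  pose proof (vx_lt n vx vy ef HF j k ltac:(lia) ltac:(lia) ltac:(lia)).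
  destruct (edge_ends n vx vy ef HF j k ltac:(unfold is_edge; lia)) as [e1 _].
  unfold val in H. rewrite par_ge in H by lia.
  assert (ORD : forall x y1 y2, on_int vx ef j k x y1 -> on_int vx ef i j x y2 -> y1 <= y2).
  { intros x y1 y2 o1 o2.
    destruct (same_param n vx vy ef HF i j k h1 h2 h3 h4 x y1 y2 o1 o2) as [t [ht [E1 E2]]].
    pose proof (adj_same n vx vy ef HF i j k h1 h2 h3 h4 t (vx k) ltac:(lra) ltac:(lra)) as S.
    destruct (Rle_or_lt y1 y2) as [u|u]; auto. exfalso. apply S. split; lra. }
  split; auto. split; [|split].
  - intros [x [y [t [u [r1 [r2 [f1 [f2 [E1 [E2 _]]]]]]]]]].
    destruct (same_param n vx vy ef HF i j k h1 h2 h3 h4 x y y) as [t0 [ht0 [E3 E4]]].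
    + exists t. auto.
    + exists u. auto.
    + apply (adj_nz n vx vy ef HF i j k h1 h2 h3 h4 t0 ltac:(lra)). lra.
  - set (t0 := (vx k + 1 + vx i) / 2).
    exists (frac_part t0), (ef j k t0), (ef i j t0). split.
    + exists t0. split; [unfold t0; lra|auto].
    + exists t0. split; [unfold t0; lra|auto].
  - left. auto.
Qed.

Lemma EP_low : forall n vx vy ef, is_flag n vx vy ef -> forall i j k,
  (1 <= i)%nat -> (i < j)%nat -> (j < k)%nat -> (k <= n)%nat ->
  val vx ef i j k < vy k -> edge_prec vx ef i j j k.
Proof.
  intros n vx vy ef HF i j k h1 h2 h3 h4 H.
  pose proof (vx_in n vx vy ef HF i ltac:(lia)). pose proof (vx_in n vx vy ef HF j ltac:(lia)).
  pose proof (vx_in n vx vy ef HF k ltac:(lia)).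
  pose proof (vx_lt n vx vy ef HF i j ltac:(lia) ltac:(lia) ltac:(lia)).
  pose proof (vx_lt n vx vy ef HF j k ltac:(lia) ltac:(lia) ltac:(lia)).
  destruct (edge_ends n vx vy ef HF j k ltac:(unfold is_edge; lia)) as [e1 _].
  unfold val in H. rewrite par_ge in H by lia.
  assert (ORD : forall x y1 y2, on_int vx ef i j x y1 -> on_int vx ef j k x y2 -> y1 <= y2).
  { intros x y1 y2 o1 o2.
    destruct (same_param n vx vy ef HF i j k h1 h2 h3 h4 x y2 y1 o2 o1) as [t [ht [E1 E2]]].
    pose proof (adj_same n vx vy ef HF i j k h1 h2 h3 h4 (vx k) t ltac:(lra) ltac:(lra)) as S.
    destruct (Rle_or_lt y1 y2) as [u|u]; auto. exfalso. apply S. split; lra. }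
  split; auto. split; [|split].
  - intros [x [y [t [u [r1 [r2 [f1 [f2 [E1 [E2 _]]]]]]]]]].
    destruct (same_param n vx vy ef HF i j k h1 h2 h3 h4 x y y) as [t0 [ht0 [E3 E4]]].
    + exists u. auto.
    + exists t. auto.
    + apply (adj_nz n vx vy ef HF i j k h1 h2 h3 h4 t0 ltac:(lra)). lra.
  - set (t0 := (vx k + 1 + vx i) / 2).
    exists (frac_part t0), (ef i j t0), (ef j k t0). split.
    + exists t0. split; [unfold t0; lra|auto].
    + exists t0. split; [unfold t0; lra|auto].
  - left. auto.
Qed.

Theorem claim16 (n : nat) (vx vy : nat -> R) (ef : nat -> nat -> R -> R) :
  (6 <= n)%nat -> is_flag n vx vy ef ->
  (exists i j, (1 <= i)%nat /\ (i < j)%nat /\ (j <= 6)%nat /\ separating n vx vy ef i j) \/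
  (exists i j k, (1 <= i)%nat /\ (i < j)%nat /\ (j < k)%nat /\ (k <= 6)%nat /\
     good_upper n vx vy ef i j k) \/
  (exists i j k, (1 <= i)%nat /\ (i < j)%nat /\ (j < k)%nat /\ (k <= 6)%nat /\
     good_lower n vx vy ef i j k).
Proof.
  intros Hn HF.
  match goal with |- ?G => destruct (classic G) as [GG|NG]; [exact GG|exfalso] end.
  assert (CH : core_hyps n (val vx ef) vy).
  { unfold core_hyps. split; [|split; [|split; [|split; [|split; [|split; [|split]]]]]].
    - intros i j h1 h2 h3. apply (hE n vx vy ef HF); auto.
    - intros i j s h1 h2 h3 h4 h5 h6 h7. apply (hNE n vx vy ef HF); auto.
    - intros i j k h1 h2 h3 h4 p q hp hq. apply (hADJ n vx vy ef HF); auto.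
    - intros i j k l h1 h2 h3 h4 h5 p1 p2 q1 q2 r1 r2 r3 r4. apply (hCR2 n vx vy ef HF); auto.
    - intros i j k l h1 h2 h3 h4 h5 a b c r1 r2 r3 r4. apply (hCR3 n vx vy ef HF); auto.
    - intros i j h1 h2 h3 [u v]. apply NG. left. exists i, j. split; [lia|]. split; [lia|]. split; [lia|].
      split.
      + eapply card_gt1_iff; [|exact u]. intro s. symmetry. apply (Vplus_iff n vx vy ef HF); lia.
      + eapply card_gt1_iff; [|exact v]. intro s. symmetry. apply (Vminus_iff n vx vy ef HF); lia.
    - intros i j k h1 h2 h3 h4 hlt.
      destruct (classic (card_gt1 (Up n (val vx ef) vy j k))) as [g|ng]; auto. exfalso.
      apply NG. right; left. exists i, j, k. split; [lia|]. split; [lia|]. split; [lia|]. split; [lia|].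
      split.
      + apply (EP_up n vx vy ef HF); auto; lia.
      + intros s1 s2 a b. destruct (Nat.eq_dec s1 s2) as [e|e]; auto. exfalso. apply ng.
        exists s1, s2. split; auto. split.
        * apply (Vplus_iff n vx vy ef HF j k ltac:(lia) ltac:(lia)); auto.
        * apply (Vplus_iff n vx vy ef HF j k ltac:(lia) ltac:(lia)); auto.
    - intros i j k h1 h2 h3 h4 hlt.
      destruct (classic (card_gt1 (Dn n (val vx ef) vy j k))) as [g|ng]; auto. exfalso.
      apply NG. right; right. exists i, j, k. split; [lia|]. split; [lia|]. split; [lia|]. split; [lia|].
      split.
      + apply (EP_low n vx vy ef HF); auto; lia.
      + intros s1 s2 a b. destruct (Nat.eq_dec s1 s2) as [e|e]; auto. exfalso. apply ng.
        exists s1, s2. split; auto. split.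
        * apply (Vminus_iff n vx vy ef HF j k ltac:(lia) ltac:(lia)); auto.
        * apply (Vminus_iff n vx vy ef HF j k ltac:(lia) ltac:(lia)); auto. }
  destruct (Rtotal_order (vy 3%nat) (val vx ef 1 2 3)) as [h|[h|h]].
  - exact (core n _ _ Hn CH h).
  - exact (hNE n vx vy ef HF 1 2 3 ltac:(lia) ltac:(lia) ltac:(lia) ltac:(lia) ltac:(lia) ltac:(lia) ltac:(lia) (eq_sym h)).
  - apply (core n _ _ Hn (core_neg n _ _ CH)). lra.
Qed.
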